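(* Let $p\in[1,\infty)$, let $X_1,X_2$ be Polish spaces, let $c:X_1\times X_2\to[0,\infty)$ be continuous, let $\mu_i\in\mathcal P_p(X_i)$, let $q>1$, and let $\varepsilon_k>0$ with $\varepsilon_k\to0$. Define $F_k,F:\mathcal P_p(X_1\times X_2)\to\mathbb R\cup\{\infty\}$ by $F_k(\pi)=\int c\,d\pi+\varepsilon_k D_q(\pi,\mu_1\otimes\mu_2)$ and $F(\pi)=\int c\,d\pi$ if $\pi\in\Pi(\mu_1,\mu_2)$, and $F_k(\pi)=F(\pi)=+\infty$ otherwise. Then for any sequence $(\pi_k)_{k\in\mathbb N}\subset\mathcal P_p(X_1\times X_2)$ with $\pi_k\to\pi$ narrowly, $$F(\pi)\le\liminf_{k\to\infty}F_k(\pi_k).$$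
   Context: $\mathcal P_p(X)$ is the set of probability measures with finite $p$-th moment and $\Pi(\mu_1,\mu_2)$ the set of couplings. The Tsallis relative entropy is $D_q(\mu,\nu)=\frac{1}{q-1}\int\big[(\frac{d\mu}{d\nu})^q-\frac{d\mu}{d\nu}\big]\,d\nu$ if $\mu\ll\nu$ and $q>1$, $+\infty$ otherwise. *)

(* Defs.v *)
From HB Require Import structures.
From mathcomp Require Import all_boot all_order all_algebra.
From mathcomp Require Import all_classical all_reals all_analysis.

Set Implicit Arguments.
Unset Strict Implicit.
Unset Printing Implicit Defensive.

Import Order.TTheory GRing.Theory Num.Theory.
Import numFieldNormedType.Exports.

Local Open Scope classical_set_scope.
Local Open Scope ring_scope.

Notation borelT X := (g_sigma_algebraType (@open X)).

Definition separable_space (X : topologicalType) : Prop :=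
  exists D : set X, countable D /\ dense D.

(* A Polish (metric) space: a complete metric space (a complete pseudometric
   space which is Hausdorff, i.e. a genuine metric space) that is separable. *)
Definition polish (R : realType) (X : completePseudoMetricType R) : Prop :=
  hausdorff_space X /\ separable_space X.

Section Defs.
Context {R : realType}.
Local Open Scope ereal_scope.

Definition finite_moment (p : R) (X : pseudoPMetricType R)
    (mu : probability (borelT X) R) : Prop :=
  exists x0 : X, \int[mu]_x (edist (x0, (x : X))) `^ p < +oo.

Definition finite_moment2 (p : R) (X1 X2 : pseudoPMetricType R)
    (pi : probability (borelT X1 * borelT X2)%type R) : Prop :=
  exists x0 : (X1 * X2)%type, \int[pi]_x (edist (x0, (x : (X1 * X2)%type))) `^ p < +oo.

Definition coupling (X1 X2 : ptopologicalType)
    (mu1 : probability (borelT X1) R) (mu2 : probability (borelT X2) R)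
    (pi : probability (borelT X1 * borelT X2)%type R) : Prop :=
  (forall A : set (borelT X1), measurable A -> pi (A `*` setT) = mu1 A) /\
  (forall B : set (borelT X2), measurable B -> pi (setT `*` B) = mu2 B).

Definition is_density {d} (T : measurableType d) (mu nu : set T -> \bar R)
    (f : T -> R) : Prop :=
  measurable_fun setT f /\ (forall x, (0 <= f x)%R) /\
  forall A, measurable A -> mu A = \int[nu]_(x in A) (f x)%:E.

(* Densities are unique nu-a.e., so the infimum below is over a set of
   (at most) one value; it is +oo (inf of the empty set) when no density
   exists, i.e. when mu is not absolutely continuous w.r.t. nu. *)
Definition tsallis {d} (T : measurableType d) (q : R)
    (mu nu : set T -> \bar R) : \bar R :=
  ereal_inf [set ((q - 1)^-1)%:E * \int[nu]_x (f x `^ q - f x)%:E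
            | f in is_density mu nu].

Definition F_eps (X1 X2 : ptopologicalType) (q eps : R)
    (c : (X1 * X2)%type -> R)
    (mu1 : probability (borelT X1) R) (mu2 : probability (borelT X2) R)
    (pi : probability (borelT X1 * borelT X2)%type R) : \bar R :=
  if pselect (coupling mu1 mu2 pi) then
    \int[pi]_x (c x)%:E + eps%:E * tsallis q pi (mu1 \x mu2)
  else +oo.

Definition F_lim (X1 X2 : ptopologicalType) (c : (X1 * X2)%type -> R)
    (mu1 : probability (borelT X1) R) (mu2 : probability (borelT X2) R)
    (pi : probability (borelT X1 * borelT X2)%type R) : \bar R :=
  if pselect (coupling mu1 mu2 pi) then \int[pi]_x (c x)%:E else +oo.

Definition narrow_cvg (X1 X2 : ptopologicalType)
    (pik : nat -> probability (borelT X1 * borelT X2)%type R)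
    (pi : probability (borelT X1 * borelT X2)%type R) : Prop :=
  forall f : (X1 * X2)%type -> R, continuous f -> (exists M : R, forall x, (`|f x| <= M)%R) ->
    (fun k => \int[pik k]_x (f x)%:E) @ \oo --> \int[pi]_x (f x)%:E.

End Defs.

(* Main.v *)
Require Import Defs.
From HB Require Import structures.
From mathcomp Require Import all_boot all_order all_algebra.
From mathcomp Require Import all_classical all_reals all_analysis.
From mathcomp Require Import lra measurable_realfun.
Import Order.TTheory GRing.Theory Num.Theory.
Import numFieldNormedType.Exports.
Local Open Scope classical_set_scope.
Local Open Scope ring_scope.



Section S.
Context {R : realType}.

Lemma open_borel (X : ptopologicalType) (U : set X) : open U ->
  measurable (U : set (borelT X)).
Proof. by move=> oU; apply: sub_sigma_algebra. Qed.

Lemma cont_meas (X : ptopologicalType) (f : X -> R) : continuous f ->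
  measurable_fun setT (f : borelT X -> R).
Proof.
move=> /continuousP cf.
apply: (measurability _ (measurable_realfun.RGenOpens.measurableE R)).
move=> _ [_ [a [b ->]] <-]; rewrite setTI.
by apply: open_borel; apply: cf; exact: interval_open.
Qed.
End S.



Lemma countable_bigcup_meas d (T : measurableType d) I (A : set I) (F : I -> set T) :
  countable A -> (forall i, A i -> measurable (F i)) ->
  measurable (\bigcup_(i in A) F i).
Proof.
move=> /countable_injP[f injf] mF.
pose G k := \bigcup_(i in [set i | A i /\ f i = k]) F i.
have -> : \bigcup_(i in A) F i = \bigcup_k G k.
  apply/seteqP; split => [x [i Ai Fx]|x [k _ [i [Ai _] Fx]]].
    by exists (f i) => //; exists i.
  by exists i.
apply: bigcupT_measurable => k.
have [[i0 [Ai0 fi0]]|nex] := pselect (exists i, A i /\ f i = k).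
  have -> : G k = F i0.
    apply/seteqP; split => [x [i [Ai fi] Fx]|x Fx]; last by exists i0.
    have ii0 : i = i0 by apply: injf; rewrite ?inE // fi fi0.
    by rewrite -ii0.
  exact: mF.
have -> : G k = set0.
  apply/seteqP; split => [x [i [Ai fi] _]|//]; exfalso; apply: nex; by exists i.
exact: measurable0.
Qed.



Section L1.
Context {R : realType} (X1 X2 : pseudoPMetricType R).

Lemma open_prod_meas (O : set (X1 * X2)) :
  separable_space X1 -> separable_space X2 -> open O ->
  measurable (O : set (borelT X1 * borelT X2)%type).
Proof.
move=> [D1 [cD1 dD1]] [D2 [cD2 dD2]] oO.
pose rho (n : nat) : R := n.+1%:R^-1.
have rho_gt0 n : 0 < rho n by rewrite /rho invr_gt0.
pose box (i : (X1 * X2) * nat) : set (X1 * X2) :=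
  (ball i.1.1 (rho i.2))° `*` (ball i.1.2 (rho i.2))°.
pose A := [set i : (X1 * X2) * nat | (D1 `*` D2 `*` setT) i /\ box i `<=` O].
have -> : O = \bigcup_(i in A) box i.
  apply/seteqP; split => [z Oz|z [i [_ bO] bz]]; last exact: bO.
  rewrite openE in oO; have /nbhs_ballP[e e0 beO] := oO z Oz.
  pose n := Num.truncn (2 / e).
  have rhole : rho n <= e / 2.
    rewrite /rho -[e / 2]invf_div lef_pV2 ?posrE ?divr_gt0 //.
    exact/ltW/truncnS_gt.
  have rh2 : 0 < rho n / 2 by rewrite divr_gt0.
  have [d1 [b1 Dd1]] := dD1 _ (ex_intro _ z.1 (nbhsx_ballx z.1 _ rh2 : (ball z.1 (rho n / 2))° z.1))
    (@open_interior _ (ball z.1 (rho n / 2))).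
  have [d2 [b2 Dd2]] := dD2 _ (ex_intro _ z.2 (nbhsx_ballx z.2 _ rh2 : (ball z.2 (rho n / 2))° z.2))
    (@open_interior _ (ball z.2 (rho n / 2))).
  have b1' : ball z.1 (rho n / 2) d1 by exact: interior_subset.
  have b2' : ball z.2 (rho n / 2) d2 by exact: interior_subset.
  exists ((d1, d2), n); last first.
    split => /=.
    - apply/nbhs_ballP; exists (rho n / 2) => // y zy.
      have := ball_triangle (ball_sym b1') zy.
      by apply: le_ball; rewrite -splitr.
    - apply/nbhs_ballP; exists (rho n / 2) => // y zy.
      have := ball_triangle (ball_sym b2') zy.
      by apply: le_ball; rewrite -splitr.
  split => //; move=> [y1 y2] [/= /interior_subset y1b /interior_subset y2b].
  have h : rho n / 2 + rho n <= e by have := rho_gt0 n; lra.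
  apply: beO; split => /=.
  - by have := ball_triangle b1' y1b; apply: le_ball.
  - by have := ball_triangle b2' y2b; apply: le_ball.
apply: countable_bigcup_meas.
  apply: (@sub_countable _ _ _ (D1 `*` D2 `*` [set: nat])).
    by apply: subset_card_le => i [].
  by apply: countableX => //; apply: countableX.
move=> i _; apply: measurableX; apply: open_borel; exact: open_interior.
Qed.


Lemma cont_prod_meas (f : X1 * X2 -> R) :
  separable_space X1 -> separable_space X2 -> continuous f ->
  measurable_fun setT (f : (borelT X1 * borelT X2)%type -> R).
Proof.
move=> s1 s2 /continuousP cf.
apply: (measurability _ (measurable_realfun.RGenOpens.measurableE R)).
move=> _ [_ [a [b ->]] <-]; rewrite setTI.
by apply: open_prod_meas => //; apply: cf; exact: interval_open.
Qed.
End L1.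



Section L2.
Context {R : realType} (X : pseudoPMetricType R).

Lemma cst1_integrable (P : {measure set (borelT X) -> \bar R}) :
  (P setT < +oo)%E -> P.-integrable setT (fun _ => 1%:E).
Proof.
move=> Pfin; apply/integrableP; split; first exact: measurable_cst.
under eq_integral do rewrite abse1.
by rewrite integral_cst // mul1e.
Qed.

Definition ufn (U : set X) (n : nat) : X -> R :=
  Urysohn (R:=R) (~` U) [set x : X | ball x (n.+1%:R^-1) `<=` U].

Lemma ufn_cont U n : continuous (ufn U n).
Proof. exact: Urysohn_continuous. Qed.

Lemma ufn01 U n x : 0 <= ufn U n x <= 1.
Proof.
by have := @Urysohn_range X R _ _ _ (imageT (ufn U n) x); rewrite /= in_itv.
Qed.

Lemma urysohn_cvg (P : {measure set (borelT X) -> \bar R}) (U : set X) :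
  (P setT < +oo)%E -> open U ->
    ((fun n => \int[P]_x (ufn U n x)%:E) @ \oo --> P U)%E.
Proof.
move=> Pfin oU.
pose rho (n : nat) : R := n.+1%:R^-1.
have rho_gt0 n : 0 < rho n by rewrite /rho invr_gt0.
pose B n := [set x : X | ball x (rho n) `<=` U].
have sep n : uniform_separator (~` U) (B n).
  apply: uniform_separatorW; exists [set xy : X * X | ball xy.1 (rho n) xy.2].
    exact: (entourage_ball _ (PosNum (rho_gt0 n))).
  apply/seteqP; split => // -[x y] [[/= nUx By] bxy].
  by apply: nUx; apply: By; exact: ball_sym.


have mU : measurable (U : set (borelT X)) by exact: open_borel.
have -> : P U = (\int[P]_x (\1_U x)%:E)%E by rewrite integral_indic // setIT.
apply: (@dominated_cvg _ _ _ P setT _ (fun n x => (ufn U n x)%:E) _ (fun _ => 1%:E)).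
- by [].
- move=> n; apply/measurable_EFinP; apply: cont_meas; exact: Urysohn_continuous.
- move=> x _; have [Ux|nUx] := pselect (U x).
  + rewrite indicE mem_set //; apply: cvg_near_cst.
    rewrite openE in oU; have /nbhs_ballP[e e0 beU] := oU x Ux.
    near=> n.
    have : ufn U n x = 1.
      apply: (Urysohn_sub1 (sep n)); exists x => //.
      apply: subset_trans beU; apply: le_ball.
      rewrite /rho invf_ple ?posrE //.
      apply: ltW; apply: lt_le_trans (truncnS_gt _) _.
      rewrite ler_nat ltnS; near: n; exact: nbhs_infty_ge.
    by move=> ->.
  + rewrite indicE (memNset nUx); apply: cvg_near_cst; apply: nearW => n.
    have h : ufn U n x = 0 by apply: (Urysohn_sub0 (sep n)); exists x.
    by rewrite h.
- by [].
- exact: cst1_integrable.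
- by move=> n x _; rewrite lee_fin ger0_norm; have /andP[] := ufn01 U n x.
Unshelve. all: by end_near.
Qed.

Lemma eq_meas_cont (P Q : {measure set (borelT X) -> \bar R}) :
  (P setT < +oo)%E ->
  (forall f : X -> R, continuous f -> (forall x, 0 <= f x <= 1) ->
     (\int[P]_x (f x)%:E = \int[Q]_x (f x)%:E)%E) ->
  forall A, measurable A -> P A = Q A.
Proof.
move=> Pfin PQ.
have Qfin : (Q setT < +oo)%E.
  have := PQ (fun _ => 1) (fun x => cvg_cst _) (fun x => ltac:(by rewrite ler01 lexx)).
  by rewrite !integral_cst // !mul1e => <-.
move=> A mA; apply: (@measure_unique _ R (borelT X) (@open X) (fun _ => setT)).
- by [].
- by move=> A1 B1 oA oB; exact: openI.
- by move=> _; exact: openT.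
- by apply/seteqP; split => // x _; exists 0%N.
- move=> U oU; have h1 := @urysohn_cvg P U Pfin oU.
  have h2 := @urysohn_cvg Q U Qfin oU.
  have e : (fun n => \int[P]_x (ufn U n x)%:E)%E = (fun n => \int[Q]_x (ufn U n x)%:E)%E.
    by apply/funext => n; apply: PQ; [exact: ufn_cont|exact: ufn01].
  rewrite -e in h2; exact: (cvg_unique _ h1 h2).
- by [].
- exact: mA.
Qed.
End L2.



Lemma subseq_lim {R : realType} (u : nat -> \bar R) L C :
  u @ \oo --> L -> (forall N, exists k, (N <= k)%N /\ u k = C) -> L = C.
Proof.
move=> uL inf.
pose phi N := projT1 (cid (inf N)).
have phiP N : (N <= phi N)%N /\ u (phi N) = C := projT2 (cid (inf N)).
have phioo : phi @ \oo --> \oo.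
  apply/cvgnyPge => A; near=> N; apply: leq_trans (proj1 (phiP N)).
  near: N; exact: nbhs_infty_ge.
have h1 : (u \o phi) @ \oo --> L := cvg_comp _ _ phioo uL.
have h2 : (u \o phi) @ \oo --> C.
  apply: cvg_near_cst; apply: nearW => N /=; exact: (proj2 (phiP N)).
exact: (cvg_unique _ h1 h2).
Unshelve. all: by end_near.
Qed.

Section marg.
Context {R : realType} (X1 X2 : pseudoPMetricType R).

Definition marg1 (pi : {measure set (borelT X1 * borelT X2)%type -> \bar R}) :
  {measure set (borelT X1) -> \bar R} :=
  measure_function.measure_function_pushforward__canonical__measure_function_Measure
    pi (@measurable_fst _ _ _ _).
Definition marg2 (pi : {measure set (borelT X1 * borelT X2)%type -> \bar R}) :
  {measure set (borelT X2) -> \bar R} :=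
  measure_function.measure_function_pushforward__canonical__measure_function_Measure
    pi (@measurable_snd _ _ _ _).

Lemma marg1E pi A : marg1 pi A = pi (A `*` setT).
Proof. have -> : A `*` [set: borelT X2] = (@fst (borelT X1) (borelT X2)) @^-1` A by apply/seteqP; split => -[] // a b [].   by []. Qed.
Lemma marg2E pi A : marg2 pi A = pi (setT `*` A).
Proof. have -> : [set: borelT X1] `*` A = (@snd (borelT X1) (borelT X2)) @^-1` A by apply/seteqP; split => -[] // a b [].   by []. Qed.

Lemma marg1_int pi (f : X1 -> R) : continuous f -> (forall x, 0 <= f x) ->
  (\int[marg1 pi]_x (f x)%:E = \int[pi]_x (f x.1)%:E)%E.
Proof.
move=> fc f0.
rewrite /marg1 /= ge0_integral_pushforward //.
- by apply/measurable_EFinP; exact: cont_meas.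
- by move=> y _; rewrite lee_fin.
Qed.
Lemma marg2_int pi (f : X2 -> R) : continuous f -> (forall x, 0 <= f x) ->
  (\int[marg2 pi]_x (f x)%:E = \int[pi]_x (f x.2)%:E)%E.
Proof.
move=> fc f0.
rewrite /marg2 /= ge0_integral_pushforward //.
- by apply/measurable_EFinP; exact: cont_meas.
- by move=> y _; rewrite lee_fin.
Qed.
End marg.

Section limcoupling.
Context {R : realType} (X1 X2 : pseudoPMetricType R).

Lemma lim_coupling (mu1 : probability (borelT X1) R) (mu2 : probability (borelT X2) R)
  (pik : nat -> probability (borelT X1 * borelT X2)%type R)
  (pi : probability (borelT X1 * borelT X2)%type R) :
  narrow_cvg pik pi -> (forall N, exists k, (N <= k)%N /\ coupling mu1 mu2 (pik k)) ->
  coupling mu1 mu2 pi.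
Proof.
move=> nc inf; split.
- move=> A mA; rewrite -marg1E.
  apply: (@eq_meas_cont _ X1 (marg1 _ _ pi) mu1) => //.
    by rewrite marg1E; apply: (@le_lt_trans _ _ 1%E); [apply: probability_le1; apply: measurableX; exact: measurableT|exact: ltry].
  move=> f fc f01.
  have f0 x : 0 <= f x by case/andP: (f01 x).
  rewrite marg1_int //.
  apply: (@subseq_lim R (fun k => \int[pik k]_x (f x.1)%:E)%E).
    apply: (nc (f \o fst)).
      by move=> x; apply: continuous_comp; [exact: cvg_fst|exact: fc].
    by exists 1 => x; rewrite ger0_norm //=; case/andP: (f01 x.1).
  move=> N; have [k [Nk [c1 _]]] := inf N; exists k; split => //.
  rewrite /= -marg1_int //; apply: eq_measure_integral => A' mA' _.
  by rewrite marg1E; apply: c1.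
- move=> A mA; rewrite -marg2E.
  apply: (@eq_meas_cont _ X2 (marg2 _ _ pi) mu2) => //.
    by rewrite marg2E; apply: (@le_lt_trans _ _ 1%E); [apply: probability_le1; apply: measurableX; exact: measurableT|exact: ltry].
  move=> f fc f01.
  have f0 x : 0 <= f x by case/andP: (f01 x).
  rewrite marg2_int //.
  apply: (@subseq_lim R (fun k => \int[pik k]_x (f x.2)%:E)%E).
    apply: (nc (f \o snd)).
      by move=> x; apply: continuous_comp; [exact: cvg_snd|exact: fc].
    by exists 1 => x; rewrite ger0_norm //=; case/andP: (f01 x.2).
  move=> N; have [k [Nk [_ c2]]] := inf N; exists k; split => //.
  rewrite /= -marg2_int //; apply: eq_measure_integral => A' mA' _.
  by rewrite marg2E; apply: c2.
Qed.
End limcoupling.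



Section L4.
Context {R : realType}.

Lemma powsub_ge (q x : R) : 1 < q -> 0 <= x -> -1 <= x `^ q - x.
Proof.
move=> q1 x0; have [x1|x1] := leP x 1.
  by have := powR_ge0 x q; lra.
have : x `^ 1 <= x `^ q by apply: ler_powR; [exact: ltW|exact: ltW].
by rewrite powRr1 //; lra.
Qed.

Local Open Scope ereal_scope.

Lemma integral_ge_m1 d (T : measurableType d) (nu : {measure set T -> \bar R})
  (g : T -> R) : measurable_fun setT g -> (forall x, -1 <= g x)%R ->
  - nu setT <= \int[nu]_x (g x)%:E.
Proof.
move=> mg g1.
rewrite integralE.
have h1 : 0 <= \int[nu]_x ((fun x => (g x)%:E)^\+ x) by apply: integral_ge0 => x _.
have h2 : \int[nu]_x ((fun x => (g x)%:E)^\- x) <= nu setT.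
  rewrite -[X in _ <= X]mul1e -integral_cst //.
  apply: ge0_le_integral => //.
  - by apply: measurable_funeneg; exact/measurable_EFinP.
  - move=> x _; rewrite funenegE /= ge_max lee01 andbT lee_fin.
    by have := g1 x; rewrite lerNl.
rewrite -[X in X <= _]add0e.
exact: (leeB h1 h2).
Qed.

Lemma tsallis_ge d (T : measurableType d) (q : R) (mu : set T -> \bar R)
  (nu : {measure set T -> \bar R}) : (1 < q)%R ->
  ((q - 1)^-1)%:E * (- nu setT) <= tsallis q mu nu.
Proof.
move=> q1; apply: le_ereal_inf_tmp => _ [f [mf [f0 _]] <-].
have qp : (0 < (q - 1)^-1)%R by rewrite invr_gt0 subr_gt0.
rewrite lee_pmul2l //.
apply: integral_ge_m1; last by move=> x; exact: powsub_ge.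
apply: measurable_funB => //.
have := measurable_powR q; move=> /(measurableT_comp) => /(_ _ _ setT f mf) h. exact: h.
Qed.

Lemma tsallis_ge1 d (T : measurableType d) (q : R) (mu : set T -> \bar R)
  (nu : {measure set T -> \bar R}) : (1 < q)%R -> nu setT = 1 ->
  (- (q - 1)^-1)%:E <= tsallis q mu nu.
Proof.
move=> q1 nu1; have := tsallis_ge _ _ q mu nu q1.
by rewrite nu1 muleN mule1 EFinN.
Qed.
End L4.



Lemma le_liminf {R : realType} (u v : nat -> \bar R) l :
  u @ \oo --> l -> (forall n, (u n <= v n)%E) -> (l <= limn_einf v)%E.
Proof.
move=> ul uv; rewrite limn_einf_lim.
have eu := cvg_einfs ul.
rewrite -(cvg_lim _ eu) //.
apply: lee_lim; [exact: is_cvg_einfs|exact: is_cvg_einfs|apply: nearW => n].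
apply: le_ereal_inf_tmp => _ [k nk <-]; apply: (le_trans _ (uv k)).
by apply: ereal_inf_lbound; exists k.
Qed.

Theorem proposition3p1 (R : realType) (p : R)
    (X1 X2 : completePseudoMetricType R)
    (c : X1 * X2 -> R) (mu1 : probability (borelT X1) R)
    (mu2 : probability (borelT X2) R) (q : R) (eps : nat -> R)
    (pik : nat -> probability (borelT X1 * borelT X2)%type R)
    (pi : probability (borelT X1 * borelT X2)%type R) :
  1 <= p -> polish X1 -> polish X2 ->
  continuous c -> (forall x, 0 <= c x) ->
  finite_moment p mu1 -> finite_moment p mu2 ->
  1 < q ->
  (forall k, 0 < eps k) -> eps @ \oo --> 0 ->
  (forall k, finite_moment2 p (pik k)) -> finite_moment2 p pi ->
  narrow_cvg pik pi ->
  (F_lim c mu1 mu2 pi <= limn_einf (fun k => F_eps q (eps k) c mu1 mu2 (pik k)))%E.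
Proof.
move=> _ [_ s1] [_ s2] cc c0 _ _ q1 eps0 epscvg _ _ nc.
have mc := @cont_prod_meas R X1 X2 c s1 s2 cc.
pose b := (q - 1)^-1.
have b0 : 0 < b by rewrite invr_gt0 subr_gt0.
have nu1 : ((mu1 \x mu2) setT = 1)%E.
  transitivity (mu1 setT * mu2 setT)%E; last by rewrite !probability_setT mule1.
  by rewrite -setXTT; apply: product_measure1E.
have Fk_ge k : (\int[pik k]_x (c x)%:E - (eps k * b)%:E <=
                F_eps q (eps k) c mu1 mu2 (pik k))%E.
  rewrite /F_eps; case: pselect => [ck|nck]; last by rewrite leey.
  apply: leeD2l.
  have h := tsallis_ge1 _ _ q (pik k) _ q1 nu1.
  have e0 : (0 <= (eps k)%:E)%E by rewrite lee_fin ltW.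
  have := lee_wpmul2l e0 h.
  by rewrite EFinN muleN -EFinM.
rewrite /F_lim; case: pselect => [cpl|ncpl]; last first.
  have [N hN] : exists N, forall k, (N <= k)%N -> ~ coupling mu1 mu2 (pik k).
    apply: contrapT => h; apply: ncpl; apply: (@lim_coupling R X1 X2 mu1 mu2 pik pi nc) => N.
    apply: contrapT => h2; apply: h; exists N => k Nk ck; apply: h2; by exists k.
  have : (fun k => F_eps q (eps k) c mu1 mu2 (pik k)) @ \oo --> +oo%E.
    apply: cvg_near_cst; near=> k; rewrite /F_eps; case: pselect => // ck.
    by exfalso; apply: (hN k) => //; near: k; exact: nbhs_infty_ge.
  by move/cvg_limn_einf_sup => [-> _].
pose cM (M : nat) (x : X1 * X2) := Num.min (c x) M%:R.
have cMc M : continuous (cM M).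
  by move=> x; exact: (continuous_min (cc x) (cvg_cst (M%:R : R^o))).
have cM0 M x : 0 <= cM M x by rewrite /cM le_min c0 ler0n.
have cMle M x : cM M x <= c x by rewrite /cM ge_min lexx.
have mcM M := @cont_prod_meas R X1 X2 (cM M) s1 s2 (cMc M).
have cMlim x : limn (fun M => (cM M x)%:E) = (c x)%:E.
  apply: cvg_lim => //; apply: cvg_near_cst; near=> M.
  rewrite /cM min_l //; apply: ltW; apply: lt_le_trans (truncnS_gt _) _.
  rewrite ler_nat; near: M; exact: nbhs_infty_ge.
have g0 : forall M x, [set: (borelT X1 * borelT X2)%type] x -> (0 <= (cM M x)%:E)%E.
  by move=> M x _; rewrite lee_fin.
have ndg : forall x, [set: (borelT X1 * borelT X2)%type] x ->
    nondecreasing_seq (fun M => (cM M x)%:E).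
  move=> x _ M N MN; rewrite lee_fin /cM le_min !ge_min lexx /=.
  by rewrite ler_nat MN orbT.
have cv := @cvg_monotone_convergence _ _ R pi setT measurableT
  (fun M x => (cM M x)%:E) (fun M => (measurable_EFinP _ _).2 (mcM M)) g0 ndg.
rewrite /= in cv.
have e : (fun x => limn (fun M => (cM M x)%:E)) = (fun x => (c x)%:E).
  by apply/funext => x; exact: cMlim.
rewrite e /= in cv.
apply: (cvge_to_le cv); apply: nearW => M.
have h1 : ((fun k => \int[pik k]_x (cM M x)%:E) @ \oo --> \int[pi]_x (cM M x)%:E)%E.
  apply: (nc (cM M) (cMc M)); exists M%:R => x.
  by rewrite ger0_norm ?cM0 // /cM ge_min lexx orbT.
have h2 : ((fun k => (eps k * b)%:E) @ \oo --> 0%:E)%E.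
  apply: cvg_EFin; first exact: nearW.
  have := @cvgMr_tmp _ _ _ _ eps 0 b epscvg; rewrite mul0r; exact.
have h3 := cvgeB (fin_num_adde_defl _ (isT : (- 0%:E)%E \is a fin_num)) h1 h2.
rewrite sube0 in h3.
apply: (le_liminf _ _ _ (h3 _)) => k /=.
apply: le_trans (Fk_ge k).
rewrite EFinN; apply: leeD => //.
apply: ge0_le_integral => //.
- by move=> x _; rewrite lee_fin.
- exact/measurable_EFinP.
- exact/measurable_EFinP.
- by move=> x _; rewrite lee_fin.
Unshelve. all: by end_near.
Qed.
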